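(* Assume $f(\cdot,u_t)$ is a diffeomorphism of $\mathbb{R}^{\dim(s)}$ for every $t$. The online natural gradient in charts for the models $\mathfrak p_t$ on $\mathcal S$ in the charts $\Phi_t$, written on $s_t:=\Phi_t(\mathbf s^t)$ and the matrix $J_t$ of $\mathcal J_t$ in chart $\Phi_t$, is equivalent to $$s_{t|t-1}\leftarrow f(s_{t-1},u_t),\quad F_{t-1}\leftarrow\frac{\partial f(s_{t-1},u_t)}{\partial s_{t-1}},\quad \hat y_t\leftarrow h(s_{t|t-1},u_t),\quad J\leftarrow(F_{t-1}^{-1})^\top J_{t-1}F_{t-1}^{-1},$$ $$J_t\leftarrow(1-\gamma_t)J+\gamma_t\,\mathbb E_{y\sim p_{\mathrm{obs}}(\cdot\mid\hat y_t)}\Big[\Big(\frac{\partial\ln p_{\mathrm{obs}}(y\mid\hat y_t)}{\partial s_{t|t-1}}\Big)^{\otimes2}\Big],\qquad s_t\leftarrow s_{t|t-1}+\eta_tJ_t^{-1}\Big(\frac{\partial\ln p_{\mathrm{obs}}(y_t\mid\hat y_t)}{\partial s_{t|t-1}}\Big)^\top,$$ where derivatives with respect to $s_{t|t-1}$ are derivatives of $s\mapsto\ln p_{\mathrm{obs}}(y\mid h(s,u_t))$ at $s=s_{t|t-1}$.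
   Context: Conventions: Jacobian $\partial y/\partial x$ has $(i,j)$ entry $\partial f_i/\partial x_j$; gradients of real functions are row vectors; for a row vector $v$, $v^{\otimes2}=v^\top v$. Exponential family: $p_{\mathrm{obs}}(y\mid\hat y)$ denotes a family of densities $\frac{1}{Z(\beta)}\exp(\sum_k\beta_kT_k(y))\lambda(dy)$ (reference measure $\lambda$, linearly independent sufficient statistics $T$), parameterized by its mean parameter $\hat y=\mathbb{E}[T(y)]$. Dynamical system: states $s_t\in\mathbb{R}^{\dim(s)}$, inputs $u_t$, smooth $f$ with $s_t=f(s_{t-1},u_t)$; smooth $h$ with predictions $\hat y_t=h(s_t,u_t)$; observations $y_t\sim p_{\mathrm{obs}}(y\mid\hat y_t)$. $\mathcal S$ is the set of sequences $\mathbf{s}=(s_t)_{t\ge0}$ with $s_t=f(s_{t-1},u_t)$ for all $t\ge1$; $\Phi_t:\mathcal S\to\mathbb{R}^{\dim(s)}$, $\Phi_t(\mathbf{s})=s_t$; $\mathfrak{p}_t(y\mid\mathbf{s}):=p_{\mathrm{obs}}(y\mid h(\Phi_t(\mathbf{s}),u_t))$. Online natural gradient in charts: on a smooth manifold $\Theta$ with models $\mathfrak p_t(y\mid\vartheta)$ and charts $\Phi_t:\Theta\to\mathbb{R}^{\dim\Theta}$ (for a tensor $g$, $\mathbf{T}\Phi(g)$ is its coordinate expression in chart $\Phi$, and $\mathbf T_\vartheta\Phi^{-1}$ the inverse operation at $\vartheta$), the algorithm maintains $\vartheta_t\in\Theta$ and a $(0,2)$-tensor $\mathcal J_t$ at $\vartheta_t$,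 updated for $t\ge1$ with learning rate $\eta_t$ and decay rate $\gamma_t$ by: $\theta\leftarrow\Phi_t(\vartheta_{t-1})$, $J\leftarrow\mathbf T\Phi_t(\mathcal J_{t-1})$; $J_t\leftarrow(1-\gamma_t)J+\gamma_t\mathbf T\Phi_t\big(\mathbb E_{y\sim\mathfrak p_t(\cdot\mid\vartheta_{t-1})}[(\partial\ln\mathfrak p_t(y\mid\vartheta)/\partial\vartheta|_{\vartheta_{t-1}})^{\otimes2}]\big)$; $\theta_t\leftarrow\theta+\eta_tJ_t^{-1}\mathbf T\Phi_t(\partial\ln\mathfrak p_t(y_t\mid\vartheta)/\partial\vartheta|_{\vartheta_{t-1}})^\top$; $\vartheta_t\leftarrow\Phi_t^{-1}(\theta_t)$, $\mathcal J_t\leftarrow\mathbf T_{\vartheta_t}\Phi_t^{-1}(J_t)$. Here $\Theta=\mathcal S$ and $\vartheta_t=\mathbf s^t$. *)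

(* Defs.v *)
From Stdlib Require Import Reals ClassicalEpsilon.
From mathcomp Require Import ssreflect ssrfun ssrbool eqtype ssrnat seq choice fintype.
Set Implicit Arguments.
Unset Strict Implicit.
Unset Printing Implicit Defensive.
Local Open Scope R_scope.

Definition vec (n : nat) := 'I_n -> R.
Definition mat (m n : nat) := 'I_m -> 'I_n -> R.

Definition sumI (n : nat) (F : 'I_n -> R) : R := foldr Rplus 0 (map F (enum 'I_n)).

Definition vadd n (x y : vec n) : vec n := fun i => x i + y i.
Definition vsub n (x y : vec n) : vec n := fun i => x i - y i.
Definition vscale n (a : R) (x : vec n) : vec n := fun i => a * x i.
Definition dot n (x y : vec n) : R := sumI (fun i => x i * y i).
Definition vnorm n (x : vec n) : R := sumI (fun i => Rabs (x i)).

Definition mulmv m n (A : mat m n) (x : vec n) : vec m :=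
  fun i => sumI (fun j => A i j * x j).
Definition mulmm m n p (A : mat m n) (B : mat n p) : mat m p :=
  fun i k => sumI (fun j => A i j * B j k).
Definition trm m n (A : mat m n) : mat n m := fun j i => A i j.
Definition madd m n (A B : mat m n) : mat m n := fun i j => A i j + B i j.
Definition mscale m n (a : R) (A : mat m n) : mat m n := fun i j => a * A i j.
Definition idm n : mat n n := fun i j => if i == j then 1 else 0.
Definition zerom m n : mat m n := fun _ _ => 0.
Definition zerov n : vec n := fun _ => 0.

(* For a row vector v (stored as vec n), v^{(x)2} = v^T v. *)
Definition outer n (v : vec n) : mat n n := fun i j => v i * v j.

(* Matrix inverse: the two-sided inverse if it exists (junk otherwise). *)
Definition is_minv n (A B : mat n n) : Prop :=
  mulmm A B = @idm n /\ mulmm B A = @idm n.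
Definition minv n (A : mat n n) : mat n n :=
  epsilon (inhabits (@zerom n n)) (fun B => is_minv A B).

Definition has_jacobian m n (g : vec n -> vec m) (x : vec n) (D : mat m n) : Prop :=
  forall eps, 0 < eps -> exists delta, 0 < delta /\
    forall hh : vec n, vnorm hh < delta ->
      vnorm (vsub (vsub (g (vadd x hh)) (g x)) (mulmv D hh)) <= eps * vnorm hh.
Definition jacobian m n (g : vec n -> vec m) (x : vec n) : mat m n :=
  epsilon (inhabits (@zerom m n)) (fun D => has_jacobian g x D).
Definition differentiable m n (g : vec n -> vec m) : Prop :=
  forall x, exists D, has_jacobian g x D.

(* Gradient (a row vector, stored as vec n) of a real function. *)
Definition has_gradient n (g : vec n -> R) (x : vec n) (v : vec n) : Prop :=
  forall eps, 0 < eps -> exists delta, 0 < delta /\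
    forall hh : vec n, vnorm hh < delta ->
      Rabs (g (vadd x hh) - g x - dot v hh) <= eps * vnorm hh.
Definition gradient n (g : vec n -> R) (x : vec n) : vec n :=
  epsilon (inhabits (@zerov n)) (fun v => has_gradient g x v).

Definition is_diffeo n (F : vec n -> vec n) : Prop :=
  exists G : vec n -> vec n,
    (forall x, G (F x) = x) /\ (forall x, F (G x) = x) /\
    differentiable F /\ differentiable G.

(* ln p_obs(y | yhat) = sum_k beta_k T_k(y) - ln Z(beta), beta = beta(yhat)
   the natural parameter corresponding to the mean parameter yhat. *)
Definition ln_pobs (Y : Type) (K : nat) (T : Y -> vec K) (beta : vec K -> vec K)
  (lnZ : vec K -> R) (y : Y) (yhat : vec K) : R :=
  dot (beta yhat) (T y) - lnZ (beta yhat).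

Definition Emat (Y : Type) (K n : nat) (E : vec K -> (Y -> R) -> R)
  (yhat : vec K) (M : Y -> mat n n) : mat n n :=
  fun i j => E yhat (fun y => M y i j).

Section Traj.
Variables (n : nat) (U : Type) (f : vec n -> U -> vec n) (u : nat -> U).

Definition is_traj (s : nat -> vec n) : Prop := forall t, s t.+1 = f (s t) (u t.+1).
Definition traj := {s : nat -> vec n | is_traj s}.

Definition chart (t : nat) (s : traj) : vec n := proj1_sig s t.

Fixpoint fwd (s0 : vec n) (t : nat) : vec n :=
  match t with 0 => s0 | t'.+1 => f (fwd s0 t') (u t'.+1) end.
Lemma fwd_traj (s0 : vec n) : is_traj (fwd s0).
Proof. by move=> t. Qed.
Definition traj_inh : inhabited traj := inhabits (exist _ (fwd (@zerov n)) (fwd_traj (@zerov n))).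

(* Phi_t^{-1} (well defined when each f(.,u_t) is bijective) *)
Definition chart_inv (t : nat) (x : vec n) : traj :=
  epsilon traj_inh (fun s => chart t s = x).
End Traj.

Section Steps.
Variables (n K : nat) (U Y : Type) (f : vec n -> U -> vec n) (h : vec n -> U -> vec K)
  (u : nat -> U) (T : Y -> vec K) (beta : vec K -> vec K) (lnZ : vec K -> R)
  (E : vec K -> (Y -> R) -> R) (yobs : nat -> Y) (eta gamma : nat -> R).

Let lp := ln_pobs T beta lnZ.

Definition ln_model (t : nat) (y : Y) (th : traj f u) : R := lp y (h (chart t th) (u t)).

(* Online natural gradient in charts, step t >= 1.  A (0,2)-tensor at a point
   is represented by its matrix in the current chart; the coordinate
   expression of a (0,2)-tensor in chart Phi_t, given its matrix Jp in chart
   Phi_{t-1}, is P^T Jp P with P the Jacobian of Phi_{t-1} o Phi_t^{-1}. *)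
Definition ong_step (t : nat) (thp : traj f u) (Jp : mat n n) : traj f u * mat n n :=
  let theta := chart t thp in
  let P := jacobian (fun x => chart t.-1 (chart_inv f u t x)) theta in
  let J := mulmm (trm P) (mulmm Jp P) in
  let g := fun y => gradient (fun x => ln_model t y (chart_inv f u t x)) theta in
  let Jt := madd (mscale (1 - gamma t) J)
                 (mscale (gamma t) (Emat E (h (chart t thp) (u t)) (fun y => outer (g y)))) in
  let thetat := vadd theta (vscale (eta t) (mulmv (minv Jt) (g (yobs t)))) in
  (chart_inv f u t thetat, Jt).

Definition ekf_step (t : nat) (sp : vec n) (Jp : mat n n) : vec n * mat n n :=
  let spred := f sp (u t) in
  let F := jacobian (fun s => f s (u t)) sp in
  let yhat := h spred (u t) in
  let Finv := minv F in
  let J := mulmm (trm Finv) (mulmm Jp Finv) in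
  let g := fun y => gradient (fun s => lp y (h s (u t))) spred in
  let Jt := madd (mscale (1 - gamma t) J)
                 (mscale (gamma t) (Emat E yhat (fun y => outer (g y)))) in
  (vadd spred (vscale (eta t) (mulmv (minv Jt) (g (yobs t)))), Jt).

Fixpoint ong_run (th0 : traj f u) (J0 : mat n n) (t : nat) : traj f u * mat n n :=
  match t with
  | 0 => (th0, J0)
  | t'.+1 => let p := ong_run th0 J0 t' in ong_step t'.+1 p.1 p.2
  end.

Fixpoint ekf_run (s0 : vec n) (J0 : mat n n) (t : nat) : vec n * mat n n :=
  match t with
  | 0 => (s0, J0)
  | t'.+1 => let p := ekf_run s0 J0 t' in ekf_step t'.+1 p.1 p.2
  end.
End Steps.

Arguments ong_step [n K U Y] f h u T beta lnZ E yobs eta gamma t thp Jp.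
Arguments ong_run [n K U Y] f h u T beta lnZ E yobs eta gamma th0 J0 t.

(* Main.v *)
Require Import Defs.
From Stdlib Require Import Reals Lra Psatz ClassicalEpsilon FunctionalExtensionality.
From mathcomp Require Import ssreflect ssrfun ssrbool eqtype ssrnat seq choice fintype.
Local Open Scope R_scope.

Definition sumL {A : Type} (l : seq A) (F : A -> R) : R := foldr Rplus 0 (map F l).

Section SumL.
Context {A : Type}.
Lemma sumL_add (l : seq A) F G : sumL l (fun i => F i + G i) = sumL l F + sumL l G.
Proof. elim: l => [|a l IH] /=; rewrite /sumL /=; [lra|]. rewrite -/(sumL l _) IH /sumL. lra. Qed.
Lemma sumL_sub (l : seq A) F G : sumL l (fun i => F i - G i) = sumL l F - sumL l G.
Proof. elim: l => [|a l IH] /=; rewrite /sumL /=; [lra|]. rewrite -/(sumL l _) IH /sumL. lra. Qed.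
Lemma sumL_scale (l : seq A) c F : sumL l (fun i => c * F i) = c * sumL l F.
Proof. elim: l => [|a l IH] /=; rewrite /sumL /=; [lra|]. rewrite -/(sumL l _) IH /sumL. lra. Qed.
Lemma sumL_scaler (l : seq A) c F : sumL l (fun i => F i * c) = sumL l F * c.
Proof. elim: l => [|a l IH] /=; rewrite /sumL /=; [lra|]. rewrite -/(sumL l _) IH /sumL. lra. Qed.
Lemma sumL_ext (l : seq A) F G : (forall i, F i = G i) -> sumL l F = sumL l G.
Proof. by move=> H; rewrite (functional_extensionality _ _ H). Qed.
Lemma sumL_le (l : seq A) F G : (forall i, F i <= G i) -> sumL l F <= sumL l G.
Proof. move=> H; elim: l => [|a l IH] /=; rewrite /sumL /=; [lra|]. rewrite -!/(sumL l _). have := H a. lra. Qed.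
Lemma sumL_ge0 (l : seq A) F : (forall i, 0 <= F i) -> 0 <= sumL l F.
Proof. move=> H; elim: l => [|a l IH] /=; rewrite /sumL /=; [lra|]. rewrite -!/(sumL l _). have := H a. lra. Qed.
Lemma sumL_0 (l : seq A) : sumL l (fun _ => 0) = 0.
Proof. elim: l => [|a l IH] /=; rewrite /sumL /=; [lra|]. rewrite -/(sumL l _) IH. lra. Qed.
Lemma sumL_abs (l : seq A) F : Rabs (sumL l F) <= sumL l (fun i => Rabs (F i)).
Proof. elim: l => [|a l IH] /=; rewrite /sumL /=. rewrite Rabs_R0; lra.
rewrite -!/(sumL l _). have := Rabs_triang (F a) (sumL l F). lra. Qed.
End SumL.
Lemma sumL_swap {A B : Type} (l : seq A) (l' : seq B) (F : A -> B -> R) :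
  sumL l (fun i => sumL l' (F i)) = sumL l' (fun j => sumL l (fun i => F i j)).
Proof.
elim: l => [|a l IH] /=. rewrite (sumL_ext l' (fun j => sumL [::] (fun i => F i j)) (fun _ => 0)) // sumL_0 //.
rewrite /sumL /= -!/(sumL _ _) IH.
have -> : (fun j => sumL (a :: l) (fun i => F i j)) = (fun j => F a j + sumL l (fun i => F i j)) by [].
by rewrite sumL_add.
Qed.

Section SumEq.
Context {A : eqType}.
Lemma sumL_delta0 (l : seq A) i a : i \notin l -> sumL l (fun j => if i == j then a j else 0) = 0.
Proof.
elim: l => [|x l IH] //=. rewrite inE negb_or => /andP [Hx Hl].
rewrite /sumL /= -/(sumL l _) IH // (negbTE Hx). lra.
Qed.
Lemma sumL_delta (l : seq A) i a : uniq l -> i \in l -> sumL l (fun j => if i == j then a j else 0) = a i.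
Proof.
elim: l => [|x l IH] //= /andP [Hx Hu]. rewrite inE => Hi.
rewrite /sumL /= -/(sumL l _).
case: (eqVneq i x) => [Eix|Nix].
  subst x. rewrite ?eqxx sumL_delta0 //. lra.
have Hi' : i \in l by move: Hi; rewrite (negbTE Nix).
rewrite IH //. lra.
Qed.
Lemma sumL_term_le (l : seq A) F i : (forall j, 0 <= F j) -> i \in l -> F i <= sumL l F.
Proof.
move=> H; elim: l => [|x l IH] //=. rewrite inE => /orP [/eqP ->|Hi]; rewrite /sumL /= -/(sumL l _).
  have := sumL_ge0 l F H. lra.
have := IH Hi. have := H x. lra.
Qed.
End SumEq.

Section Vec.
Context {n : nat}.
Implicit Types x y hh : vec n.
Implicit Types A B C : mat n n.

Lemma sumI_sumL (F : 'I_n -> R) : sumI F = sumL (enum 'I_n) F.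
Proof. by []. Qed.

Lemma sumI_delta (i : 'I_n) (a : 'I_n -> R) : sumI (fun j => if i == j then a j else 0) = a i.
Proof. rewrite sumI_sumL sumL_delta // ?enum_uniq // mem_enum //. Qed.

Lemma sumI_delta' (i : 'I_n) (a : 'I_n -> R) : sumI (fun j => if j == i then a j else 0) = a i.
Proof. rewrite -(sumI_delta i a). apply: sumL_ext => j. by rewrite eq_sym. Qed.

Lemma vnorm_ge0 x : 0 <= vnorm x.
Proof. apply: sumL_ge0 => i; exact: Rabs_pos. Qed.

Lemma comp_le x i : Rabs (x i) <= vnorm x.
Proof. rewrite /vnorm sumI_sumL. apply: (@sumL_term_le _ (enum 'I_n) (fun i => Rabs (x i))) => [j|]; [exact: Rabs_pos| by rewrite mem_enum]. Qed.

Lemma vnorm_add_le x y : vnorm (vadd x y) <= vnorm x + vnorm y.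
Proof. rewrite /vnorm !sumI_sumL -sumL_add. apply: sumL_le => i. exact: Rabs_triang. Qed.

Lemma vnorm_zero x : (forall i, x i = 0) -> vnorm x = 0.
Proof. move=> H. rewrite /vnorm sumI_sumL (sumL_ext _ _ (fun _ => 0)) ?sumL_0 // => i. by rewrite H Rabs_R0. Qed.

Definition mnorm A := sumI (fun i => sumI (fun j => Rabs (A i j))).

Lemma mnorm_ge0 A : 0 <= mnorm A.
Proof. apply: sumL_ge0 => i; apply: sumL_ge0 => j; exact: Rabs_pos. Qed.

Lemma mulmv_bound A x : vnorm (mulmv A x) <= mnorm A * vnorm x.
Proof.
rewrite /vnorm /mnorm /mulmv !sumI_sumL -sumL_scaler. apply: sumL_le => i.
apply: Rle_trans; first exact: sumL_abs.
rewrite -sumL_scaler. apply: sumL_le => j. rewrite Rabs_mult.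
apply: Rmult_le_compat_l; [exact: Rabs_pos| exact: comp_le].
Qed.

Lemma mulmv_sub A x y : mulmv A (vsub x y) = vsub (mulmv A x) (mulmv A y).
Proof. apply: functional_extensionality => i. rewrite /mulmv /vsub !sumI_sumL -sumL_sub.
apply: sumL_ext => j. ring. Qed.

Lemma mulmv_mulmm A B x : mulmv (mulmm B A) x = mulmv B (mulmv A x).
Proof.
apply: functional_extensionality => i. rewrite /mulmv /mulmm !sumI_sumL.
rewrite (sumL_ext _ _ (fun j => sumL (enum 'I_n) (fun k => B i k * (A k j * x j)))); last first.
  move=> j. rewrite -sumL_scaler. apply: sumL_ext => k. ring.
rewrite sumL_swap. apply: sumL_ext => k. by rewrite -sumL_scale.
Qed.

Lemma mulmmA A B C : mulmm (mulmm A B) C = mulmm A (mulmm B C).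
Proof.
apply: functional_extensionality => i; apply: functional_extensionality => l.
rewrite /mulmm !sumI_sumL.
rewrite (sumL_ext _ _ (fun j => sumL (enum 'I_n) (fun k => A i k * (B k j * C j l)))); last first.
  move=> j. rewrite -sumL_scaler. apply: sumL_ext => k. ring.
rewrite sumL_swap. apply: sumL_ext => k. by rewrite -sumL_scale.
Qed.

Lemma mulmm1 A : mulmm A (@idm n) = A.
Proof.
apply: functional_extensionality => i; apply: functional_extensionality => k.
rewrite /mulmm /idm -(sumI_delta' k (fun j => A i j)). apply: sumL_ext => j.
case: (j == k); ring.
Qed.

Lemma mul1mm A : mulmm (@idm n) A = A.
Proof.
apply: functional_extensionality => i; apply: functional_extensionality => k.
rewrite /mulmm /idm -(sumI_delta i (fun j => A j k)). apply: sumL_ext => j.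
case: (i == j); ring.
Qed.

Lemma mulmv1 x : mulmv (@idm n) x = x.
Proof.
apply: functional_extensionality => i.
rewrite /mulmv /idm -(sumI_delta i (fun j => x j)). apply: sumL_ext => j.
case: (i == j); ring.
Qed.

Lemma minv_unique A B : is_minv A B -> minv A = B.
Proof.
move=> HB. have HM : is_minv A (minv A).
  rewrite /minv. apply: (epsilon_spec (inhabits (@zerom n n)) (fun B => is_minv A B)). by exists B.
case: HB => HAB HBA; case: HM => HAM HMA.
by rewrite -(mulmm1 (minv A)) -HAB -mulmmA HMA mul1mm.
Qed.

End Vec.

Section Der.
Context {n : nat}.

Lemma jac_id (x : vec n) : has_jacobian (fun y => y) x (@idm n).
Proof.
move=> eps He. exists 1; split; [lra|] => hh _.
rewrite mulmv1 vnorm_zero. have := vnorm_ge0 hh. nra.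
move=> i. rewrite /vsub /vadd. ring.
Qed.

Lemma jac_unique (g : vec n -> vec n) x D1 D2 :
  has_jacobian g x D1 -> has_jacobian g x D2 -> D1 = D2.
Proof.
move=> H1 H2.
apply: functional_extensionality => i; apply: functional_extensionality => j.
set d := D1 i j - D2 i j.
have key : forall eps, 0 < eps -> Rabs d <= 2 * eps.
  move=> eps He.
  case: (H1 eps He) => d1 [Hd1 P1]. case: (H2 eps He) => d2 [Hd2 P2].
  set r := Rmin d1 d2 / 2.
  have Hm : 0 < Rmin d1 d2 by apply: Rmin_pos.
  have Hr : 0 < r by rewrite /r; lra.
  have Hr1 : r < d1 by rewrite /r; have := Rmin_l d1 d2; lra.
  have Hr2 : r < d2 by rewrite /r; have := Rmin_r d1 d2; lra.
  set hh : vec n := fun k => if j == k then r else 0.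
  have Nh : vnorm hh = r.
    transitivity (Rabs r); last by rewrite Rabs_right //; lra.
    rewrite /vnorm -(sumI_delta j (fun _ => Rabs r)). apply: sumL_ext => k.
    rewrite /hh. case: (j == k) => //. by rewrite Rabs_R0.
  have Mv : forall D : mat n n, mulmv D hh i = D i j * r.
    move=> D. rewrite /mulmv -(sumI_delta j (fun k => D i k * r)). apply: sumL_ext => k.
    rewrite /hh. case: (j == k); ring.
  have Q1 := P1 hh ltac:(lra). have Q2 := P2 hh ltac:(lra).
  rewrite Nh in Q1 Q2.
  set v1 := vsub _ (mulmv D1 hh) in Q1. set v2 := vsub _ (mulmv D2 hh) in Q2.
  have E : r * d = v2 i - v1 i by rewrite /v1 /v2 /vsub !Mv /d; ring.
  have C1 := comp_le v1 i. have C2 := comp_le v2 i.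
  have := Rabs_triang (v2 i) (- v1 i). rewrite Rabs_Ropp -/(Rminus _ _) -E Rabs_mult (Rabs_right r); last lra.
  move=> T. have : r * Rabs d <= r * (2 * eps) by lra.
  move/Rmult_le_reg_l. apply. exact Hr.
apply: Rminus_diag_uniq. fold d.
case: (Req_dec d 0) => // Hd.
have Ha : 0 < Rabs d by apply: Rabs_pos_lt.
have := key (Rabs d / 4) ltac:(lra). lra.
Qed.

Lemma jac_chain (F G : vec n -> vec n) x A B :
  has_jacobian F x A -> has_jacobian G (F x) B ->
  has_jacobian (fun y => G (F y)) x (mulmm B A).
Proof.
move=> HF HG eps He.
set CA := mnorm A. set CB := mnorm B.
have HCA : 0 <= CA := mnorm_ge0 A. have HCB : 0 <= CB := mnorm_ge0 B.
set e2 := eps / (2 * (CA + 1)).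
set e1 := Rmin 1 (eps / (2 * (CB + 1))).
have He2 : 0 < e2 by rewrite /e2; apply: Rdiv_lt_0_compat; lra.
have He1 : 0 < e1 by rewrite /e1; apply: Rmin_pos; [lra| apply: Rdiv_lt_0_compat; lra].
have He1a : e1 <= 1 by apply: Rmin_l.
have He1b : CB * e1 <= eps / 2.
  have : e1 <= eps / (2 * (CB + 1)) by apply: Rmin_r.
  move=> H. apply: Rle_trans. apply: Rmult_le_compat_l; [exact HCB| exact H].
  have -> : CB * (eps / (2 * (CB + 1))) = (eps / 2) * (CB / (CB + 1)) by field; lra.
  have : CB / (CB + 1) <= 1.
    apply: (Rmult_le_reg_r (CB + 1)); first lra.
    rewrite /Rdiv Rmult_assoc Rinv_l; lra.
  nra.
have He2b : e2 * (CA + 1) = eps / 2 by rewrite /e2; field; lra.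
case: (HF e1 He1) => d1 [Hd1 P1]. case: (HG e2 He2) => d2 [Hd2 P2].
exists (Rmin d1 (d2 / (CA + 1))); split.
  apply: Rmin_pos => //. apply: Rdiv_lt_0_compat; lra.
move=> hh Hh.
have Hh1 : vnorm hh < d1 by have := Rmin_l d1 (d2 / (CA + 1)); lra.
have Hh2 : vnorm hh < d2 / (CA + 1) by have := Rmin_r d1 (d2 / (CA + 1)); lra.
have Nh := vnorm_ge0 hh.
set k := vsub (F (vadd x hh)) (F x).
set r1 := vsub k (mulmv A hh).
have Q1 : vnorm r1 <= e1 * vnorm hh := P1 hh Hh1.
have Ek : k = vadd r1 (mulmv A hh).
  apply: functional_extensionality => i. rewrite /r1 /vadd /vsub. ring.
have Nk : vnorm k <= (CA + 1) * vnorm hh.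
  rewrite Ek. apply: Rle_trans; first exact: vnorm_add_le.
  have := mulmv_bound A hh. rewrite -/CA. nra.
have Nk2 : vnorm k < d2.
  apply: Rle_lt_trans; first exact Nk.
  have -> : d2 = (CA + 1) * (d2 / (CA + 1)) by field; lra.
  apply: Rmult_lt_compat_l; lra.
have Q2 := P2 k Nk2.
have Ev : vadd (F x) k = F (vadd x hh).
  apply: functional_extensionality => i. rewrite /k /vadd /vsub. ring.
rewrite Ev in Q2.
set r2 := vsub (vsub (G (F (vadd x hh))) (G (F x))) (mulmv B k) in Q2.
have Et : vsub (vsub (G (F (vadd x hh))) (G (F x))) (mulmv (mulmm B A) hh)
          = vadd r2 (mulmv B r1).
  rewrite mulmv_mulmm /r1 mulmv_sub /r2.
  apply: functional_extensionality => i. rewrite /vadd /vsub. ring.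
rewrite Et. apply: Rle_trans; first exact: vnorm_add_le.
have := mulmv_bound B r1. rewrite -/CB => Hb.
have Nr2 : vnorm r2 <= e2 * ((CA + 1) * vnorm hh).
  apply: Rle_trans; first exact Q2. apply: Rmult_le_compat_l; lra.
have : CB * vnorm r1 <= CB * (e1 * vnorm hh) by apply: Rmult_le_compat_l.
have : CB * (e1 * vnorm hh) <= eps / 2 * vnorm hh.
  rewrite -Rmult_assoc. apply: Rmult_le_compat_r; lra.
have : e2 * ((CA + 1) * vnorm hh) = eps / 2 * vnorm hh by rewrite -Rmult_assoc He2b.
lra.
Qed.

Lemma jac_inv (F G : vec n -> vec n) x :
  (forall y, G (F y) = y) -> (forall y, F (G y) = y) ->
  differentiable F -> differentiable G ->
  jacobian G (F x) = minv (jacobian F x).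
Proof.
move=> GF FG dF dG.
have JF : forall z, has_jacobian F z (jacobian F z).
  move=> z. rewrite /jacobian. apply: (epsilon_spec (inhabits (@zerom n n)) (fun D => has_jacobian F z D)). exact: dF.
have JG : forall z, has_jacobian G z (jacobian G z).
  move=> z. rewrite /jacobian. apply: (epsilon_spec (inhabits (@zerom n n)) (fun D => has_jacobian G z D)). exact: dG.
have id1 : (fun y => G (F y)) = (fun y => y) by apply: functional_extensionality.
have id2 : (fun y => F (G y)) = (fun y => y) by apply: functional_extensionality.
have H1 := @jac_chain F G x _ _ (JF x) (JG (F x)). rewrite id1 in H1.
have E1 := @jac_unique _ _ _ _ H1 (jac_id x).
have H2 := @jac_chain G F (F x) _ _ (JG (F x)) (JF (G (F x))). rewrite id2 GF in H2.
have E2 := @jac_unique _ _ _ _ H2 (jac_id (F x)).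
symmetry. apply: minv_unique. by split.
Qed.
End Der.

Lemma traj_exists n U (f : vec n -> U -> vec n) u
  (hf : forall t, is_diffeo (fun s => f s (u t))) :
  forall t x, exists s : traj f u, chart t s = x.
Proof.
elim=> [|t IH] x.
  exists (exist _ (fwd f u x) (fwd_traj f u x)). by [].
case: (hf t.+1) => G [GF [FG _]].
case: (IH (G x)) => s Hs. exists s.
rewrite /chart (proj2_sig s t). rewrite /chart in Hs. by rewrite Hs FG.
Qed.

Lemma chart_inv_spec n U (f : vec n -> U -> vec n) u
  (hf : forall t, is_diffeo (fun s => f s (u t))) t x :
  chart t (chart_inv f u t x) = x.
Proof.
rewrite /chart_inv. apply: (epsilon_spec (traj_inh f u) (fun s => chart t s = x)).
exact: traj_exists.
Qed.

Arguments chart_inv_spec {n U f u} hf t x.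

Theorem corollary9 (n K : nat) (U Y : Type)
  (f : vec n -> U -> vec n) (h : vec n -> U -> vec K) (u : nat -> U)
  (T : Y -> vec K) (beta : vec K -> vec K) (lnZ : vec K -> R)
  (E : vec K -> (Y -> R) -> R) (yobs : nat -> Y) (eta gamma : nat -> R)
  (hf : forall t, is_diffeo (fun s => f s (u t)))
  (hh : forall t, differentiable (fun s => h s (u t)))
  (hmean : forall (yhat : vec K) (k : 'I_K), E yhat (fun y => T y k) = yhat k)
  (th0 : traj f u) (J0 : mat n n) :
  forall t : nat,
    chart t (ong_run f h u T beta lnZ E yobs eta gamma th0 J0 t).1
      = (ekf_run f h u T beta lnZ E yobs eta gamma (chart 0 th0) J0 t).1
    /\ (ong_run f h u T beta lnZ E yobs eta gamma th0 J0 t).2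
      = (ekf_run f h u T beta lnZ E yobs eta gamma (chart 0 th0) J0 t).2.
Proof.
elim=> [|t [IH1 IH2]]; first by split.
rewrite /=.
set p := ong_run _ _ _ _ _ _ _ _ _ _ th0 J0 t.
set q := ekf_run _ _ _ _ _ _ _ _ _ _ _ J0 t.
rewrite /ong_step /ekf_step -/p -/q in IH1 IH2 *.
have Eth : chart t.+1 p.1 = f q.1 (u t.+1).
  by rewrite /chart (proj2_sig p.1 t) -IH1.
case: (hf t.+1) => G [GF [FG [dF dG]]].
have Eprev : (fun x => chart t.+1.-1 (chart_inv f u t.+1 x)) = G.
  apply: functional_extensionality => x.
  have := chart_inv_spec hf t.+1 x.
  have Ht := proj2_sig (chart_inv f u t.+1 x) t.
  rewrite /chart Ht /= => Hx. by rewrite -[in RHS]Hx GF.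
have EP : jacobian (fun x => chart t.+1.-1 (chart_inv f u t.+1 x)) (chart t.+1 p.1)
          = minv (jacobian (fun s => f s (u t.+1)) q.1).
  rewrite Eprev Eth. exact: (@jac_inv _ (fun s => f s (u t.+1)) G).
have Eg : forall y, gradient (fun x => ln_model h T beta lnZ t.+1 y (chart_inv f u t.+1 x)) (chart t.+1 p.1)
        = gradient (fun s => ln_pobs T beta lnZ y (h s (u t.+1))) (f q.1 (u t.+1)).
  move=> y. rewrite Eth. f_equal.
  apply: functional_extensionality => x. by rewrite /ln_model chart_inv_spec.
have Eo : (fun y => outer (gradient (fun x => ln_model h T beta lnZ t.+1 y (chart_inv f u t.+1 x)) (chart t.+1 p.1)))
        = (fun y => outer (gradient (fun s => ln_pobs T beta lnZ y (h s (u t.+1))) (f q.1 (u t.+1)))).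
  apply: functional_extensionality => y. by rewrite Eg.
rewrite EP Eo Eg Eth IH2 chart_inv_spec //.
Qed.
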